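(* $\{x^2 y : x,y \in \widetilde C\} = [\tfrac{8}{27},1]$.
   Context: $C=\{\sum_{k\ge1}\alpha_k3^{-k}:\alpha_k\in\{0,2\}\}$ is the middle-thirds Cantor set, and $\widetilde C = C\cap[\tfrac23,1] = \tfrac23+\tfrac13C$. *)

(* Defs.v *)
From Stdlib Require Import Reals.
From Coquelicot Require Import Coquelicot.
Open Scope R_scope.

(* Middle-thirds Cantor set: x = sum_{k>=1} alpha_k 3^{-k}, alpha_k in {0,2}.
   Here the digit sequence is indexed from 0: term n is alpha_{n+1} / 3^{n+1}. *)
Definition cantor (x : R) : Prop :=
  exists a : nat -> bool,
    is_series (fun n : nat => (if a n then 2 else 0) / 3 ^ (S n)) x.

Definition cantor_tilde (x : R) : Prop := cantor x /\ 2/3 <= x <= 1.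

(* Main.v *)
Require Import Defs.
From Stdlib Require Import Reals.
From Coquelicot Require Import Coquelicot.
From Stdlib Require Import Lra Psatz Lia.
Open Scope R_scope.

Lemma ineqA p q h : 0<h -> 2/3<=p -> 2/3<=q -> p+3*h<=1 -> q+3*h<=1 ->
  (p+2*h)^2*q <= (p+h)^2*(q+3*h).
Proof. intros. assert (q*(2*p+3*h) <= 3*(p+h)^2) by nra. nra. Qed.

Lemma ineqB p q h : 0<h -> 2/3<=p -> 2/3<=q -> p+h<=1 ->
  p^2*(q+2*h) <= (p+h)^2*(q+h).
Proof. intros. assert (p*p*h <= 2*p*q*h) by (apply Rmult_le_compat_r; nra).
 assert (0 <= 2*p*h*h + h*h*q + h*h*h) by (assert (0<=p*h*h) by (apply Rmult_le_pos; nra); assert (0<=h*h*q) by (apply Rmult_le_pos; nra); assert (0<=h*h*h) by (apply Rmult_le_pos; nra); nra).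
 nra. Qed.

Lemma ineqC p q e : 0<e -> 2/3<=p -> 2/3<=q -> p+e<=1 -> q+e<=1 ->
  (p+e)^2*(q+e) - p^2*q <= 7*e.
Proof. intros. replace ((p+e)^2*(q+e) - p^2*q) with (e*(p*p + (2*p+e)*(q+e))) by ring.
 assert (p*p <= 1) by nra. assert ((2*p+e)*(q+e) <= 2) by nra.
 assert (e*(p*p + (2*p+e)*(q+e)) <= e*3) by (apply Rmult_le_compat_l; lra). lra. Qed.

Definition chA (z p q h : R) : bool :=
  if Rle_dec z ((p+h)^2*(q+3*h)) then false else true.
Definition chB (z p' q h : R) : bool :=
  if Rle_dec z ((p'+h)^2*(q+h)) then false else true.
Definition dg (b : bool) : R := if b then 2 else 0.

Fixpoint st (z : R) (m : nat) : R * R :=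
  match m with
  | O => (2/3, 2/3)
  | S m => let p := fst (st z m) in let q := snd (st z m) in
    let h := / 3 ^ (S (S m)) in
    let p' := p + dg (chA z p q h) * h in
    let q' := q + dg (chB z p' q h) * h in (p', q')
  end.

Definition da (z : R) (k : nat) : bool :=
  match k with O => true
  | S m => chA z (fst (st z m)) (snd (st z m)) (/ 3 ^ (S (S m))) end.
Definition db (z : R) (k : nat) : bool :=
  match k with O => true
  | S m => let h := / 3 ^ (S (S m)) in let p := fst (st z m) in
     chB z (p + dg (chA z p (snd (st z m)) h) * h) (snd (st z m)) h end.

Lemma step_ok z p q h : 0<h -> 2/3<=p -> 2/3<=q -> p+3*h<=1 -> q+3*h<=1 ->
  p^2*q <= z <= (p+3*h)^2*(q+3*h) ->
  let p' := p + dg (chA z p q h) * h in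
  let q' := q + dg (chB z p' q h) * h in
  p'^2*q' <= z <= (p'+h)^2*(q'+h) /\ p <= p' /\ p'+h <= p+3*h /\ q <= q' /\ q'+h <= q+3*h.
Proof.
  intros Hh Hp Hq Hp1 Hq1 Hz p' q'.
  assert (HA: p'^2*q <= z <= (p'+h)^2*(q+3*h) /\ p <= p' /\ p'+h <= p+3*h).
  { unfold p', chA, dg. destruct (Rle_dec z ((p+h)^2*(q+3*h))).
    - replace (p + 0*h) with p by ring. lra.
    - pose proof (ineqA p q h). replace (p+2*h+h) with (p+3*h) by ring. split; [|lra]. split; [|lra]. nra. }
  assert (Hp'1 : p' + h <= 1) by lra.
  assert (Hp'0 : 2/3 <= p') by lra.
  unfold q', chB, dg. destruct (Rle_dec z ((p'+h)^2*(q+h))).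
  - replace (q + 0*h) with q by ring. lra.
  - pose proof (ineqB p' q h). replace (q+2*h+h) with (q+3*h) by ring. lra.
Qed.

Lemma e_rel m : / 3 ^ (S m) = 3 * / 3 ^ (S (S m)).
Proof. assert (0 < 3 ^ S m) by (apply pow_lt; lra). simpl. simpl in H. field. lra. Qed.

Lemma e_pos m : 0 < / 3 ^ m.
Proof. apply Rinv_0_lt_compat, pow_lt; lra. Qed.

Lemma st_S z m : st z (S m) =
  (fst (st z m) + dg (da z (S m)) * / 3 ^ (S (S m)),
   snd (st z m) + dg (db z (S m)) * / 3 ^ (S (S m))).
Proof. reflexivity. Qed.

Lemma inv z : 8/27 <= z <= 1 -> forall m,
  let p := fst (st z m) in let q := snd (st z m) in let e := / 3 ^ (S m) in
  2/3 <= p /\ 2/3 <= q /\ p + e <= 1 /\ q + e <= 1 /\ p^2*q <= z <= (p+e)^2*(q+e).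
Proof.
  intros Hz m. induction m as [|m IH].
  - simpl. lra.
  - cbv zeta in IH. destruct IH as (H1 & H2 & H3 & H4 & H5).
    rewrite e_rel in H3, H4, H5.
    pose proof (step_ok z _ _ _ (e_pos (S (S m))) H1 H2 H3 H4 H5) as S.
    cbv zeta in S |- *. cbn [st fst snd]. lra.
Qed.

Lemma nest z m k :
  fst (st z m) <= fst (st z (m+k)) /\
  fst (st z (m+k)) + / 3 ^ (S (m+k)) <= fst (st z m) + / 3 ^ (S m) /\
  snd (st z m) <= snd (st z (m+k)) /\
  snd (st z (m+k)) + / 3 ^ (S (m+k)) <= snd (st z m) + / 3 ^ (S m).
Proof.
  induction k as [|k IH].
  - rewrite Nat.add_0_r. lra.
  - rewrite Nat.add_succ_r, st_S. cbn [fst snd].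
    pose proof (e_rel (m+k)). pose proof (e_pos (S (S (m+k)))).
    assert (0 <= dg (da z (S (m+k))) <= 2) by (unfold dg; destruct da; lra).
    assert (0 <= dg (db z (S (m+k))) <= 2) by (unfold dg; destruct db; lra).
    set (h := / 3 ^ S (S (m+k))) in *.
    assert (0 <= dg (da z (S (m+k))) * h <= 2*h) by nra.
    assert (0 <= dg (db z (S (m+k))) * h <= 2*h) by nra.
    lra.
Qed.

Lemma psum_a z n : sum_f_R0 (fun k => (if da z k then 2 else 0) / 3 ^ S k) n = fst (st z n).
Proof.
  induction n as [|n IH].
  - simpl. field.
  - cbn [sum_f_R0]. rewrite IH, st_S. cbn [fst]. unfold dg, Rdiv. ring.
Qed.

Lemma psum_b z n : sum_f_R0 (fun k => (if db z k then 2 else 0) / 3 ^ S k) n = snd (st z n).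
Proof.
  induction n as [|n IH].
  - simpl. field.
  - cbn [sum_f_R0]. rewrite IH, st_S. cbn [snd]. unfold dg, Rdiv. ring.
Qed.

Lemma small_e eps : 0 < eps -> exists N, / 3 ^ (S N) < eps.
Proof.
  intros He. destruct (pow_lt_1_zero (/3)) with (y := eps) as [N HN].
  - rewrite Rabs_pos_eq; lra.
  - exact He.
  - exists (S N). specialize (HN (S N) (le_S _ _ (le_n _))).
    rewrite Rabs_pos_eq in HN by (apply pow_le; lra).
    rewrite pow_inv in HN. pose proof (e_rel N). pose proof (e_pos (S (S N))). lra.
Qed.

Lemma lim_nested (u : nat -> R) :
  (forall m k : nat, u m <= u (m+k)%nat /\ u (m+k)%nat + / 3 ^ (S (m+k)) <= u m + / 3 ^ (S m)) ->
  exists x, (forall n, u n <= x <= u n + / 3 ^ (S n)) /\ (forall eps, eps > 0 -> exists N, forall n, (n >= N)%nat -> R_dist (u n) x < eps).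
Proof.
  intros Hn.
  assert (Hub : forall n m, u n <= u m + / 3 ^ (S m)).
  { intros n m. destruct (Compare_dec.le_lt_dec n m) as [Hl|Hl].
    - replace m with (n + (m-n))%nat by lia. pose proof (Hn n (m-n)%nat).
      pose proof (e_pos (S (n + (m-n)))). lra.
    - replace n with (m + (n-m))%nat by lia. pose proof (Hn m (n-m)%nat).
      pose proof (e_pos (S (m + (n-m)))). lra. }
  destruct (completeness (fun r => exists n, r = u n)) as [x [Hx1 Hx2]].
  - exists (u 0%nat + / 3 ^ 1). intros r [n ->]. apply Hub.
  - exists (u 0%nat). exists 0%nat. reflexivity.
  - exists x.
    assert (B : forall n, u n <= x <= u n + / 3 ^ (S n)).
    { intros n. split.
      - apply Hx1. exists n. reflexivity.
      - apply Hx2. intros r [k ->]. apply Hub. }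
    split; [exact B|].
    intros eps He. destruct (small_e eps He) as [N HN]. exists N.
    intros n Hnn. replace n with (N + (n-N))%nat by lia.
    pose proof (Hn N (n-N)%nat). pose proof (B (N + (n-N))%nat). pose proof (B N).
    pose proof (e_pos (S (N + (n-N)))).
    unfold R_dist. apply Rabs_def1; lra.
Qed.

Theorem theorem3p5 :
  forall z : R,
    (exists x y : R, cantor_tilde x /\ cantor_tilde y /\ z = x ^ 2 * y) <->
    8/27 <= z <= 1.
Proof.
  intros z. split.
  - intros (x & y & [_ Hx] & [_ Hy] & ->). nra.
  - intros Hz.
    destruct (lim_nested (fun n => fst (st z n))) as [x [Bx Sx]].
    { intros m k. pose proof (nest z m k). lra. }
    destruct (lim_nested (fun n => snd (st z n))) as [y [By Sy]].
    { intros m k. pose proof (nest z m k). lra. }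
    exists x, y.
    pose proof (inv z Hz 0%nat) as I0. pose proof (Bx 0%nat) as X0. pose proof (By 0%nat) as Y0.
    simpl in I0, X0, Y0.
    split; [split; [|lra]|split; [split; [|lra]|]].
    + exists (da z). apply is_series_Reals. intros eps He.
      destruct (Sx eps He) as [N HN]. exists N. intros n Hn. rewrite psum_a. apply HN, Hn.
    + exists (db z). apply is_series_Reals. intros eps He.
      destruct (Sy eps He) as [N HN]. exists N. intros n Hn. rewrite psum_b. apply HN, Hn.
    + destruct (Req_dec z (x^2*y)) as [E|E]; [exact E|exfalso].
      assert (Hd : 0 < Rabs (z - x^2*y) / 7).
      { apply Rdiv_lt_0_compat; [apply Rabs_pos_lt; lra|lra]. }
      destruct (small_e _ Hd) as [N HN].
      pose proof (inv z Hz N) as (H1 & H2 & H3 & H4 & H5).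
      pose proof (Bx N). pose proof (By N). pose proof (e_pos (S N)).
      set (p := fst (st z N)) in *. set (q := snd (st z N)) in *.
      set (e := / 3 ^ S N) in *.
      pose proof (ineqC p q e H6 H1 H2 H3 H4).
      assert (p^2*q <= x^2*y) by (apply Rmult_le_compat; nra).
      assert (x^2*y <= (p+e)^2*(q+e)) by (apply Rmult_le_compat; nra).
      apply Rabs_def2b in HN || idtac.
      destruct (Rle_dec 0 (z - x^2*y)).
      * rewrite Rabs_pos_eq in HN by lra. lra.
      * rewrite Rabs_left in HN by lra. lra.
Qed.
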